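(* Assume the well-posedness, controllability, common optimal equilibrium and strict stochastic dissipativity assumptions below, and suppose moreover that there is $\gamma>0$ with $\rho(x,i)\ge\gamma\|x-x_s\|^2$ for all $x\in\mathbb{R}^n$ and $i\in\mathcal{N}$. Then the EMPC-controlled system $x_{k+1}=f(x_k,\kappa_N(x_k,\theta_k),\theta_k)$ is mean square stable: $\mathbb{E}[\|x_k\|^2]\to0$ as $k\to\infty$ for all initial conditions $(x_0,\theta_0)$ in the feasibility domain $X_N$.
   Context: Setting: $\mathcal{N}=\{1,\dots,\nu\}$; $\{\theta_k\}$ a time-homogeneous Markov chain on $\mathcal{N}$ with transition matrix $P=(p_{ij})$ on a filtered probability space $(\Omega,\mathfrak{F},\{\mathfrak{F}_k\},\mathbb{P})$, $\mathfrak{F}_k$ generated by the history up to time $k$; system $x_{k+1}=f(x_k,u_k,\theta_k)$ with $x_k,\theta_k$ measured at time $k$; constraints $(x_k,u_k)\in Y_{\theta_k}$; stage cost $\ell$. $u\lhd\mathfrak{F}_k$ means $\mathfrak{F}_k$-measurable. Cover $\mathcal{C}(i)=\{j:p_{ij}>0\}$; bet node $\mathrm{bet}(i)\in\mathcal{C}(i)$ maximizing $p_{ij}$ over $j\in\mathcal{C}(i)$. Well-posedness: each $\ell(\cdot,\cdot,\theta)$ nonnegative, lower semicontinuous, level-bounded in $u$ locally uniformly in $x$; $f(\cdot,\cdot,\theta)$ continuous; $Y_\theta$ nonempty compact; chain irreducible and aperiodic. Optimal steady states $(x_s^\theta,u_s^\theta)$ minimize $\ell(x,u,\theta)$ s.t.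 $f(x,u,\theta)=x$, $(x,u)\in Y_\theta$. Controllability: for all $i,j$ there is $\bar u_s^{i,j}$ with $(x_s^i,\bar u_s^{i,j})\in Y_j$, $f(x_s^i,\bar u_s^{i,j},j)=x_s^{\mathrm{bet}(j)}$. Common optimal equilibrium: one optimal steady state $(x_s,u_s)=(0,0)$ common to all modes, with optimal steady-state cost $\ell_s$. Strict stochastic dissipativity: there are $\lambda:\mathbb{R}^n\times\mathcal{N}\to\mathbb{R}$, lower semicontinuous in the first argument, with $\lambda(x_s,\theta)=\lambda_s$ independent of $\theta$, and a convex $\rho:\mathbb{R}^n\times\mathcal{N}\to\mathbb{R}_+$ positive definite w.r.t. $x_s$, such that $\mathbb{E}[\lambda(x_{k+1},\theta_{k+1})-\lambda(x_k,\theta_k)\mid\mathfrak{F}_k]\le\ell(x_k,u_k,\theta_k)-\ell_s-\rho(x_k,\theta_k)$ for all states, inputs and modes, where $x_{k+1}=f(x_k,u_k,\theta_k)$. EMPC problem $\mathbb{P}(x,\theta)$: minimize $\mathbb{E}[\sum_{j=0}^{N-1}\ell(x_j,u_j,\theta_j)\mid\mathfrak{F}_0]$ subject to $x_{k+1}=f(x_k,u_k,\theta_k)$, $(x_k,u_k)\in Y_{\theta_k}$, $(x_0,\theta_0)=(x,\theta)$, $x_N=x_s^{\mathrm{bet}(\theta_{N-1})}$, $u_k\lhd\mathfrak{F}_k$; $X_N$ is its feasibility domain and $\kappa_N$ the first element of an optimal policy. *)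

(* Defs.v *)
From HB Require Import structures.
From mathcomp Require Import all_boot all_order all_algebra.
From mathcomp Require Import all_classical all_reals all_analysis.
Set Implicit Arguments. Unset Strict Implicit. Unset Printing Implicit Defensive.
Import Order.TTheory GRing.Theory Num.Theory.
Import numFieldNormedType.Exports.
Local Open Scope classical_set_scope.
Local Open Scope ring_scope.

Section EMPC.
Variables (R : realType) (n m nu : nat).
Notation state := 'rV[R]_n.
Notation input := 'rV[R]_m.
Notation mode := 'I_nu.

Definition sqnorm (x : state) : R := \sum_(j < n) (x 0 j) ^+ 2.

Definition stochastic (P : 'M[R]_nu) : Prop :=
  (forall i j, 0 <= P i j) /\ (forall i, \sum_(j < nu) P i j = 1).

Definition irreducible (P : 'M[R]_nu) : Prop :=
  forall i j : mode, exists k : nat, (0 < k)%N /\ 0 < (P ^+ k) i j.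

Definition aperiodic (P : 'M[R]_nu) : Prop :=
  forall (i : mode) (d : nat),
    (forall k : nat, (0 < k)%N -> 0 < (P ^+ k) i i -> (d %| k)%N) -> d = 1%N.

(* probability of the mode path a :: rest, conditional on theta_0 = a *)
Fixpoint pprob (P : 'M[R]_nu) (a : mode) (rest : seq mode) : R :=
  match rest with
  | [::] => 1
  | b :: r => P a b * pprob P b r
  end.

(* --- open-loop policies adapted to the mode history ----------------------
   A policy pi maps the history [:: theta_0; ...; theta_k] to u_k; this is
   exactly an F_k-measurable input sequence. *)
Definition policy := seq mode -> input.

Fixpoint run (f : state -> input -> mode -> state) (pi : policy)
    (past : seq mode) (x : state) (rest : seq mode) : state :=
  match rest with
  | [::] => x
  | th :: r => run f pi (rcons past th) (f x (pi (rcons past th)) th) r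
  end.

(* along the history h = theta0 :: t of length k+1: x_k, u_k, theta_k *)
Definition xk f pi (x0 : state) (th0 : mode) (t : seq mode) : state :=
  run f pi [::] x0 (belast th0 t).
Definition uk (pi : policy) (th0 : mode) (t : seq mode) : input := pi (th0 :: t).
Definition thk (th0 : mode) (t : seq mode) : mode := last th0 t.

(* feasibility for P(x, theta): constraints hold almost surely,
   terminal constraint x_N = x_s^{bet(theta_{N-1})} = 0 (common equilibrium) *)
Definition feasible (P : 'M[R]_nu) (f : state -> input -> mode -> state)
    (Y : mode -> set (state * input)) (N : nat) (pi : policy)
    (x : state) (th : mode) : Prop :=
  (forall (k : nat) (t : k.-tuple mode), (k < N)%N -> 0 < pprob P th t ->
      Y (thk th t) (xk f pi x th t, uk pi th t)) /\
  (forall t : N.-1.-tuple mode, 0 < pprob P th t ->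
      run f pi [::] x (th :: t) = 0).

Definition cost (P : 'M[R]_nu) (f : state -> input -> mode -> state)
    (l : state -> input -> mode -> R) (N : nat) (pi : policy)
    (x : state) (th : mode) : R :=
  \sum_(k < N) \sum_(t : k.-tuple mode)
     pprob P th t * l (xk f pi x th t) (uk pi th t) (thk th t).

Definition XN P f Y N (x : state) (th : mode) : Prop :=
  exists pi : policy, feasible P f Y N pi x th.

Definition optimal P f Y l N (pi : policy) (x : state) (th : mode) : Prop :=
  feasible P f Y N pi x th /\
  forall pi' : policy, feasible P f Y N pi' x th ->
    cost P f l N pi x th <= cost P f l N pi' x th.

Fixpoint clrun (f : state -> input -> mode -> state)
    (kappa : state -> mode -> input) (x : state) (rest : seq mode) : state :=
  match rest with
  | [::] => x
  | th :: r => clrun f kappa (f x (kappa x th) th) r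
  end.

Definition msq (P : 'M[R]_nu) f kappa (x0 : state) (th0 : mode) (k : nat) : R :=
  \sum_(t : k.-tuple mode) pprob P th0 t * sqnorm (clrun f kappa x0 (belast th0 t)).

Definition level_bounded_loc_unif (g : state -> input -> R) : Prop :=
  forall (xb : state) (a : R), exists2 V, nbhs xb V &
    exists M : R, forall x u, V x -> g x u <= a -> `|u| <= M.

Definition convex_state (g : state -> R) : Prop :=
  forall (x y : state) (t : R), 0 <= t <= 1 ->
    g (t *: x + (1 - t) *: y) <= t * g x + (1 - t) * g y.

End EMPC.

(* Main.v *)
Require Import Defs.
From HB Require Import structures.
From mathcomp Require Import all_boot all_order all_algebra.
From mathcomp Require Import all_classical all_reals all_analysis.
From mathcomp Require Import lra zify.
Import Order.TTheory GRing.Theory Num.Theory.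
Import numFieldNormedType.Exports.
Local Open Scope classical_set_scope.
Local Open Scope ring_scope.

Lemma nneg_bounded_cvg0 (R : realType) (a : R ^nat) (C : R) :
  (forall k, 0 <= a k) -> (forall K, \sum_(k < K) a k <= C) -> a @ \oo --> 0.
Proof.
move=> a0 aC; apply: cvg_series_cvg_0.
apply: nondecreasing_is_cvgn.
  by rewrite seriesEnat; apply: nondecreasing_series => k _ _; exact: a0.
exists C => _ [k _ <-]; rewrite seriesEord /=; exact: aC.
Qed.

Section Tup.
Variable T : finType.
Variable R : realType.

Lemma sum_tuple0 (F : seq T -> R) : \sum_(t : 0.-tuple T) F t = F [::].
Proof.
rewrite (eq_bigr (fun=> F [::])); last by move=> t _; rewrite tuple0.
by rewrite big_const card_tuple expn0 /=; rewrite addr0.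
Qed.

Lemma sum_tuple_cons k (F : seq T -> R) :
  \sum_(t : k.+1.-tuple T) F t = \sum_(b : T) \sum_(s : k.-tuple T) F (b :: s).
Proof.
rewrite pair_big /=.
rewrite (reindex (fun p : T * k.-tuple T => [tuple of p.1 :: p.2])) /=; first by [].
exists (fun t : k.+1.-tuple T => (thead t, [tuple of behead t])).
  by move=> [b s] _ /=; congr pair; apply: val_inj.
move=> t _; apply: val_inj => /=.
by case: t => [[|a s]] //=.
Qed.

Lemma sum_tuple_rev k (F : seq T -> R) :
  \sum_(t : k.-tuple T) F t = \sum_(t : k.-tuple T) F (rev t).
Proof.
rewrite (reindex (fun t : k.-tuple T => [tuple of rev t])) /=; first by [].
exists (fun t : k.-tuple T => [tuple of rev t]) => t _; apply: val_inj => /=;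
  by rewrite revK.
Qed.

Lemma sum_tuple_rcons k (F : seq T -> R) :
  \sum_(t : k.+1.-tuple T) F t = \sum_(s : k.-tuple T) \sum_(b : T) F (rcons s b).
Proof.
rewrite sum_tuple_rev (sum_tuple_cons k (fun t => F (rev t))) exchange_big /=.
rewrite [RHS](sum_tuple_rev k (fun s => \sum_(b : T) F (rcons s b))).
by apply: eq_bigr => s _; apply: eq_bigr => b _; rewrite rev_cons.
Qed.
End Tup.
Arguments sum_tuple0 {T R}.
Arguments sum_tuple_cons {T R}.
Arguments sum_tuple_rcons {T R}.
Arguments sum_tuple_rev {T R}.

Section Basic.
Variables (R : realType) (n m nu : nat).
Variable P : 'M[R]_nu.

Lemma pprob_ge0 (P0 : forall i j, 0 <= P i j) a s : 0 <= pprob P a s.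
Proof.
elim: s a => [|b s IH] a /=; first exact: ler01.
by rewrite mulr_ge0.
Qed.

Lemma pprob_rcons a s b : pprob P a (rcons s b) = pprob P a s * P (last a s) b.
Proof.
elim: s a => [|c s IH] a /=; first by rewrite mulr1 mul1r.
by rewrite IH mulrA.
Qed.

Lemma pprob_prefix (P0 : forall i j, 0 <= P i j) a s b :
  0 < pprob P a (rcons s b) -> 0 < pprob P a s.
Proof.
rewrite pprob_rcons => H; rewrite lt0r pprob_ge0 // andbT.
by apply/eqP => E; move: H; rewrite E mul0r ltxx.
Qed.

Variable f : 'rV[R]_n -> 'rV[R]_m -> 'I_nu -> 'rV[R]_n.

Lemma run_rcons (pi : policy R m nu) past x s a :
  run f pi past x (rcons s a) =
  f (run f pi past x s) (pi (rcons (past ++ s) a)) a.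
Proof.
elim: s past x => [|c s IH] past x /=; first by rewrite cats0.
by rewrite IH cat_rcons.
Qed.

Lemma clrun_rcons kappa x s a :
  clrun f kappa x (rcons s a) =
  f (clrun f kappa x s) (kappa (clrun f kappa x s) a) a.
Proof. by elim: s x => [|c s IH] x //=. Qed.

Lemma run_shift (pi pi' : policy R m nu) th N past x s :
  (forall h, (size h < N)%N -> pi' h = pi (th :: h)) ->
  (size past + size s < N)%N ->
  run f pi' past x s = run f pi (th :: past) x s.
Proof.
move=> Hpi; elim: s past x => [|c s IH] past x //= Hs.
rewrite Hpi; last by rewrite size_rcons; move: Hs; rewrite addnS; apply: leq_trans; rewrite ltnS leq_addr.
rewrite IH //; by rewrite size_rcons addSn -addnS.
Qed.

Lemma sum_pprob (Ps : stochastic P) k a :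
  \sum_(t : k.-tuple 'I_nu) pprob P a t = 1.
Proof.
elim: k a => [|k IH] a.
  by rewrite (sum_tuple0 (fun t => pprob P a t)).
rewrite (sum_tuple_cons k (fun t => pprob P a t)) /=.
rewrite -[RHS](proj2 Ps a); apply: eq_bigr => b _.
by rewrite -mulr_sumr IH mulr1.
Qed.
End Basic.
Arguments pprob_ge0 {R nu P}.
Arguments pprob_rcons {R nu P}.
Arguments pprob_prefix {R nu P}.
Arguments run_rcons {R n m nu f}.
Arguments clrun_rcons {R n m nu f}.
Arguments run_shift {R n m nu f}.
Arguments sum_pprob {R nu P}.

Section LB.
Variables (R : realType) (n m nu : nat).
Variable P : 'M[R]_nu.
Variable f : 'rV[R]_n -> 'rV[R]_m -> 'I_nu -> 'rV[R]_n.
Variable l : 'rV[R]_n -> 'rV[R]_m -> 'I_nu -> R.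
Variable Y : 'I_nu -> set ('rV[R]_n * 'rV[R]_m).
Variables (ls lams : R) (lam rho : 'rV[R]_n -> 'I_nu -> R).
Hypothesis Ps : stochastic P.
Hypothesis lam0 : forall i, lam 0 i = lams.
Hypothesis rho0 : forall x i, 0 <= rho x i.
Hypothesis diss : forall x u i,
     \sum_(j < nu) P i j * lam (f x u i) j - lam x i <= l x u i - ls - rho x i.

Lemma xk_rcons (pi : policy R m nu) x th (s : seq 'I_nu) b :
  xk f pi x th (rcons s b) = f (xk f pi x th s) (uk pi th s) (thk th s).
Proof.
rewrite /xk /uk /thk belast_rcons (lastI th s) run_rcons /= -lastI.
by [].
Qed.

Lemma cost_lb N (pi : policy R m nu) x th : (0 < N)%N ->
  feasible P f Y N pi x th -> N%:R * ls + lams - lam x th <= cost P f l N pi x th.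
Proof.
move=> N0 Hf.
have P0 := proj1 Ps.
pose D k := \sum_(t : k.-tuple 'I_nu) pprob P th t * lam (xk f pi x th t) (thk th t).
pose Tm k := \sum_(t : k.-tuple 'I_nu)
   pprob P th t * l (xk f pi x th t) (uk pi th t) (thk th t).
have step k : D k.+1 <= D k + Tm k - ls.
  rewrite /D /Tm (sum_tuple_rcons k (fun t => pprob P th t * lam (xk f pi x th t) (thk th t))).
  rewrite -[in leRHS](mulr1 ls) -(sum_pprob Ps k th) mulr_sumr -big_split -sumrB /=.
  apply: ler_sum => s _.
  under eq_bigr => b _ do rewrite xk_rcons pprob_rcons /thk last_rcons -mulrA.
  rewrite -mulr_sumr -mulrDr [ls * _]mulrC -mulrBr; apply: ler_wpM2l; first exact: pprob_ge0.
  have := diss (xk f pi x th s) (uk pi th s) (thk th s).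
  have := rho0 (xk f pi x th s) (thk th s).
  rewrite /thk; lra.
have D0 : D 0%N = lam x th.
  by rewrite /D (sum_tuple0 (fun t => pprob P th t * lam (xk f pi x th t) (thk th t))) /= mul1r.
have DN : D N = lams.
  move: Hf; rewrite /D; case: N N0 => // N' _ [_ Ht].
  rewrite (sum_tuple_rcons N' (fun t => pprob P th t * lam (xk f pi x th t) (thk th t))).
  transitivity (\sum_(s : N'.-tuple 'I_nu) \sum_(b : 'I_nu) pprob P th (rcons s b) * lams).
    apply: eq_bigr => s _; apply: eq_bigr => b _.
    have [sp|] := ltP 0 (pprob P th s).
      by rewrite /xk belast_rcons Ht // /thk last_rcons lam0.
    move=> sle; have s0 : pprob P th s = 0 by apply/eqP; rewrite eq_le sle pprob_ge0.
    by rewrite pprob_rcons s0 !mul0r.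
  rewrite -(sum_tuple_rcons N' (fun t => pprob P th t * lams)) -mulr_suml.
  by rewrite sum_pprob // mul1r.
have ind K : K%:R * ls + D K - D 0%N <= \sum_(k < K) Tm k.
  elim: K => [|K IH]; first by rewrite big_ord0 mul0r add0r subrr.
  have e : K.+1%:R = 1 + K%:R :> R by rewrite mulrS.
  rewrite big_ord_recr /= e.
  have := step K; lra.
by have := ind N; rewrite DN D0.
Qed.
End LB.

Section Shift.
Variables (R : realType) (n m nu : nat).
Variable P : 'M[R]_nu.
Variable f : 'rV[R]_n -> 'rV[R]_m -> 'I_nu -> 'rV[R]_n.
Variable l : 'rV[R]_n -> 'rV[R]_m -> 'I_nu -> R.
Variable Y : 'I_nu -> set ('rV[R]_n * 'rV[R]_m).
Variable ls : R.
Hypothesis Ps : stochastic P.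
Hypothesis eq0 : forall i, Y i (0, 0) /\ f 0 0 i = 0.
Hypothesis l00 : forall i, l 0 0 i = ls.

Definition pish (pi : policy R m nu) (th : 'I_nu) (N : nat) : policy R m nu :=
  fun h => if (size h < N)%N then pi (th :: h) else 0.

Lemma xk_shift N (pi : policy R m nu) x th j (t : seq 'I_nu) :
  (size t < N)%N ->
  xk f (pish pi th N) (f x (pi [:: th]) th) j t = xk f pi x th (j :: t).
Proof.
move=> st; rewrite /xk (run_shift pi _ th N) //; last by rewrite size_belast.
by move=> h hN; rewrite /pish hN.
Qed.

Lemma xk_term N (pi : policy R m nu) x th j (t : seq 'I_nu) :
  feasible P f Y N pi x th -> size t = N.-1 ->
  0 < pprob P th (j :: t) -> xk f pi x th (j :: t) = 0.
Proof.
move=> [_ Ht] st pp.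
have sb : size (belast j t) == N.-1 by rewrite size_belast st.
have := Ht (Tuple sb) => /=; rewrite /xk /= => -> //.
apply: (pprob_prefix (proj1 Ps) th _ (last j t)).
by rewrite -lastI.
Qed.

Lemma shift_feas N (pi : policy R m nu) x th j : (0 < N)%N ->
  feasible P f Y N pi x th -> 0 < P th j ->
  feasible P f Y N (pish pi th N) (f x (pi [:: th]) th) j.
Proof.
move=> N0 Hf Pj; split.
  move=> k t kN pp.
  have pp' : 0 < pprob P th (j :: t) by rewrite /= mulr_gt0.
  rewrite xk_shift ?size_tuple // /uk /pish /= size_tuple.
  have [kN'|] := ltnP k.+1 N.
    by have := (proj1 Hf) k.+1 [tuple of j :: t] kN' pp'.
  move=> Nk; have kN1 : k = N.-1 by lia.
  rewrite (xk_term _ _ _ _ _ _ Hf _ pp') ?size_tuple //.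
  exact: (proj1 (eq0 _)).
move=> t pp.
have pp' : 0 < pprob P th (j :: t) by rewrite /= mulr_gt0.
rewrite (lastI j t) run_rcons /= -/(xk f (pish pi th N) (f x (pi [:: th]) th) j t).
rewrite xk_shift ?size_tuple; last by rewrite prednK.
rewrite (xk_term _ _ _ _ _ _ Hf _ pp') ?size_tuple // /pish size_rcons size_belast size_tuple.
by rewrite prednK // ltnn (proj2 (eq0 _)).
Qed.

Lemma shift_cost N (pi : policy R m nu) x th : (0 < N)%N ->
  feasible P f Y N pi x th ->
  \sum_(j < nu) P th j * cost P f l N (pish pi th N) (f x (pi [:: th]) th) j
  = cost P f l N pi x th - l x (pi [:: th]) th + ls.
Proof.
case: N => // N' _ Hf.
have P0 := proj1 Ps.
pose A j := \sum_(k < N') \sum_(t : k.-tuple 'I_nu)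
   pprob P j t * l (xk f pi x th (j :: t)) (uk pi th (j :: t)) (thk th (j :: t)).
have Hj j : P th j * cost P f l N'.+1 (pish pi th N'.+1) (f x (pi [:: th]) th) j
           = P th j * (A j + ls).
  have [Pj|Pj] := ltP 0 (P th j); last first.
    have -> : P th j = 0 by apply/eqP; rewrite eq_le Pj P0.
    by rewrite !mul0r.
  rewrite /cost big_ord_recr /=; congr (P th j * (_ + _)).
    apply: eq_bigr => i _; apply: eq_bigr => t _.
    rewrite xk_shift; last by rewrite size_tuple (leq_trans (ltn_ord i)).
    by rewrite /uk /pish /= size_tuple ltnS ltn_ord.
  transitivity (\sum_(t : N'.-tuple 'I_nu) pprob P j t * ls); last first.
    by rewrite -mulr_suml sum_pprob // mul1r.
  apply: eq_bigr => t _.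
  have [pp|pp] := ltP 0 (pprob P j t); last first.
    have -> : pprob P j t = 0 by apply/eqP; rewrite eq_le pp pprob_ge0.
    by rewrite !mul0r.
  have pp' : 0 < pprob P th (j :: t) by rewrite /= mulr_gt0.
  rewrite xk_shift ?size_tuple // (xk_term _ _ _ _ _ _ Hf _ pp') ?size_tuple //.
  by rewrite /uk /pish /= size_tuple ltnn l00.
rewrite (eq_bigr _ (fun j _ => Hj j)).
under eq_bigr => j _ do rewrite mulrDr.
rewrite big_split /= -mulr_suml (proj2 Ps th) mul1r.
rewrite /cost big_ord_recl /=.
rewrite (sum_tuple0 (fun t => pprob P th t * l (xk f pi x th t) (uk pi th t) (thk th t))) /= mul1r.
have E : \sum_(i < N') \sum_(t : (bump 0 i).-tuple 'I_nu)
      pprob P th t * l (xk f pi x th t) (uk pi th t) (thk th t)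
    = \sum_(j < nu) P th j * A j.
  rewrite /A; under [RHS]eq_bigr => j _ do rewrite mulr_sumr.
  rewrite exchange_big /=; apply: eq_bigr => i _.
  rewrite (sum_tuple_cons i (fun t => pprob P th t * l (xk f pi x th t) (uk pi th t) (thk th t))).
  apply: eq_bigr => j _; rewrite mulr_sumr; apply: eq_bigr => t _.
  by rewrite /= mulrA.
rewrite E /xk /=; lra.
Qed.
End Shift.
Arguments pish {R m nu}.
Theorem theorem2 (R : realType) (n m nu N : nat)
  (P : 'M[R]_nu)
  (f : 'rV[R]_n -> 'rV[R]_m -> 'I_nu -> 'rV[R]_n)
  (l : 'rV[R]_n -> 'rV[R]_m -> 'I_nu -> R)
  (Y : 'I_nu -> set ('rV[R]_n * 'rV[R]_m))
  (ls : R)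
  (lam : 'rV[R]_n -> 'I_nu -> R) (lams : R)
  (rho : 'rV[R]_n -> 'I_nu -> R)
  (gamma : R)
  (kappa : 'rV[R]_n -> 'I_nu -> 'rV[R]_m) :
  (0 < N)%N ->
  (* well-posedness *)
  (forall x u i, 0 <= l x u i) ->
  (forall i, lower_semicontinuous
               (fun p : 'rV[R]_n * 'rV[R]_m => (l p.1 p.2 i)%:E)) ->
  (forall i, level_bounded_loc_unif (fun x u => l x u i)) ->
  (forall i, continuous (fun p : 'rV[R]_n * 'rV[R]_m => f p.1 p.2 i)) ->
  (forall i, Y i !=set0 /\ compact (Y i)) ->
  stochastic P -> irreducible P -> aperiodic P ->
  (* common optimal equilibrium (x_s, u_s) = (0, 0) with cost ls *)
  (forall i, Y i (0, 0) /\ f 0 0 i = 0 /\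
     (forall x u, f x u i = x -> Y i (x, u) -> l 0 0 i <= l x u i)) ->
  (forall i, l 0 0 i = ls) ->
  (* controllability *)
  (forall i j : 'I_nu, exists u, Y j (0, u) /\ f 0 u j = 0) ->
  (* strict stochastic dissipativity *)
  (forall i, lower_semicontinuous (fun x : 'rV[R]_n => (lam x i)%:E)) ->
  (forall i, lam 0 i = lams) ->
  (forall x i, 0 <= rho x i) ->
  (forall i, convex_state (fun x => rho x i)) ->
  (forall i, rho 0 i = 0 /\ forall x, x != 0 -> 0 < rho x i) ->
  (forall x u i,
     \sum_(j < nu) P i j * lam (f x u i) j - lam x i
       <= l x u i - ls - rho x i) ->
  (* quadratic lower bound on rho *)
  0 < gamma ->
  (forall x i, gamma * sqnorm x <= rho x i) ->
  (* kappa_N: first element of an optimal policy of P(x, theta) *)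
  (forall x th, XN P f Y N x th ->
     exists pi, optimal P f Y l N pi x th /\ pi [:: th] = kappa x th) ->
  (* mean square stability *)
  forall x0 th0, XN P f Y N x0 th0 ->
    msq P f kappa x0 th0 @ \oo --> (0 : R).
Proof.
move=> N0 l0 _ _ _ _ Ps _ _ Heq l00 _ _ lam0 rho0 _ rhopos diss gpos rhoq Hk x0 th0 HX0.
have P0 := proj1 Ps.
have eq0 : forall i, Y i (0, 0) /\ f 0 0 i = 0.
  by move=> i; have [a [b _]] := Heq i.
have : forall p : 'rV[R]_n * 'I_nu, exists pi : policy R m nu,
    XN P f Y N p.1 p.2 -> optimal P f Y l N pi p.1 p.2 /\ pi [:: p.2] = kappa p.1 p.2.
  move=> [x th] /=; have [H|H] := pselect (XN P f Y N x th).
    by have [pi Hpi] := Hk x th H; exists pi.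
  by exists (fun _ => 0).
move=> /choice [piF HpiF].
pose V x th := cost P f l N (piF (x, th)) x th.
pose W x th := V x th + lam x th.
pose c := N%:R * ls + lams.
have Wlb x th : XN P f Y N x th -> c <= W x th.
  move=> HX; have [[Hfe _] _] := HpiF (x, th) HX.
  have := cost_lb R n m nu P f l Y ls lams lam rho Ps lam0 rho0 diss N (piF (x, th)) x th N0 Hfe.
  rewrite /W /V /c; lra.
have step x th : XN P f Y N x th ->
    (forall j, 0 < P th j -> XN P f Y N (f x (kappa x th) th) j) /\
    \sum_(j < nu) P th j * W (f x (kappa x th) th) j <= W x th - rho x th.
  move=> HX; have [[Hfe Hopt] Hkap] := HpiF (x, th) HX.
  move: Hkap Hfe Hopt => /= <- Hfe Hopt.
  set pi := piF (x, th).
  have feas j : 0 < P th j -> feasible P f Y N (pish pi th N) (f x (pi [:: th]) th) j.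
    by move=> Pj; apply: shift_feas.
  split; first by move=> j Pj; exists (pish pi th N); apply: feas.
  have HV : \sum_(j < nu) P th j * V (f x (pi [:: th]) th) j <=
            \sum_(j < nu) P th j * cost P f l N (pish pi th N) (f x (pi [:: th]) th) j.
    apply: ler_sum => j _.
    have [Pj|Pj] := ltP 0 (P th j); last first.
      have -> : P th j = 0 by apply/eqP; rewrite eq_le Pj P0.
      by rewrite !mul0r.
    apply: ler_wpM2l; first exact: P0.
    have HXj : XN P f Y N (f x (pi [:: th]) th) j by exists (pish pi th N); apply: feas.
    have [[_ Ho] _] := HpiF (f x (pi [:: th]) th, j) HXj.
    exact: Ho (feas j Pj).
  rewrite (shift_cost R n m nu P f l Y ls Ps l00 N pi x th N0 Hfe) in HV.
  have Hd := diss x (pi [:: th]) th.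
  rewrite /W; under eq_bigr => j _ do rewrite mulrDr.
  rewrite big_split /=.
  move: HV Hd; rewrite /V -/pi; lra.
pose xc (s : seq 'I_nu) := clrun f kappa x0 (belast th0 s).
pose thc (s : seq 'I_nu) := last th0 s.
have xc_rcons s b : xc (rcons s b) = f (xc s) (kappa (xc s) (thc s)) (thc s).
  by rewrite /xc belast_rcons (lastI th0 s) clrun_rcons.
have inv : forall s, 0 < pprob P th0 s -> XN P f Y N (xc s) (thc s).
  elim/last_ind => [|s b IH]; first by move=> _; exact: HX0.
  move=> pp; have pps := pprob_prefix (proj1 Ps) th0 s b pp.
  move: pp; rewrite pprob_rcons pmulr_rgt0 // => Pb.
  rewrite xc_rcons /thc last_rcons; exact: (proj1 (step _ _ (IH pps))).
pose M k := \sum_(t : k.-tuple 'I_nu) pprob P th0 t * W (xc t) (thc t).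
pose Rk k := \sum_(t : k.-tuple 'I_nu) pprob P th0 t * rho (xc t) (thc t).
have Mstep k : M k.+1 <= M k - Rk k.
  rewrite /M /Rk (sum_tuple_rcons k (fun t => pprob P th0 t * W (xc t) (thc t))) -sumrB.
  apply: ler_sum => s _.
  under eq_bigr => b _ do rewrite xc_rcons pprob_rcons /thc last_rcons -mulrA.
  rewrite -mulr_sumr -mulrBr.
  have [pp|pp] := ltP 0 (pprob P th0 s); last first.
    have -> : pprob P th0 s = 0 by apply/eqP; rewrite eq_le pp pprob_ge0.
    by rewrite !mul0r.
  apply: ler_wpM2l; first exact: ltW.
  exact: (proj2 (step _ _ (inv s pp))).
have Mlb k : c <= M k.
  rewrite -[c]mul1r -(sum_pprob Ps k th0) mulr_suml; apply: ler_sum => t _.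
  have [pp|pp] := ltP 0 (pprob P th0 t); last first.
    have -> : pprob P th0 t = 0 by apply/eqP; rewrite eq_le pp pprob_ge0.
    by rewrite !mul0r.
  by apply: ler_wpM2l; [exact: ltW | exact: Wlb (inv t pp)].
have M0 : M 0%N = W x0 th0.
  by rewrite /M (sum_tuple0 (fun t => pprob P th0 t * W (xc t) (thc t))) /= mul1r.
have ind K : M K + \sum_(k < K) Rk k <= M 0%N.
  elim: K => [|K IH]; first by rewrite big_ord0 addr0.
  rewrite big_ord_recr /=; have := Mstep K; lra.
have msq0 k : 0 <= msq P f kappa x0 th0 k.
  apply: sumr_ge0 => t _; apply: mulr_ge0; first exact: pprob_ge0.
  by apply: sumr_ge0 => j _; exact: sqr_ge0.
have msqR k : gamma * msq P f kappa x0 th0 k <= Rk k.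
  rewrite /msq mulr_sumr; apply: ler_sum => t _.
  rewrite mulrCA; apply: ler_wpM2l; first exact: pprob_ge0.
  exact: rhoq.
apply: (nneg_bounded_cvg0 R _ ((W x0 th0 - c) / gamma)) => // K.
rewrite ler_pdivlMr // mulrC mulr_sumr.
apply: (@le_trans _ _ (\sum_(k < K) Rk k)); first by apply: ler_sum => k _; exact: msqR.
have := ind K; have := Mlb K; rewrite M0; lra.
Qed.
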